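(* Let $k$ be an algebraically closed field, $B$ a finite-dimensional $k$-algebra, $P_0$ a finitely generated projective $B$-module, and $A=B[P_0]$ the one-point extension algebra. Let $\mathcal{R}:\mathrm{Mod}\text{-}A\to\mathrm{Mod}\text{-}B$ and $\mathcal{E}:\mathrm{Mod}\text{-}B\to\mathrm{Mod}\text{-}A$ be the restriction and extension functors, and let $S$ be the simple injective $A$-module described below. For an $A$-module $X$, let $\delta_X:X\to\mathcal{E}\mathcal{R}X$ be the unit of the adjunction $(\mathcal{R},\mathcal{E})$ at $X$. Then $\delta_X$ is an epimorphism if and only if $\mathrm{Ext}^1_A(S,X)=0$.
   Context: All modules are left modules; $\mathrm{Mod}\text{-}R$ denotes the category of all $R$-modules. $A=B[P_0]$ is the matrix algebra $\begin{pmatrix} B & P_0\\ 0 & k\end{pmatrix}$ with matrix addition and multiplication induced by the $B$-module structure of $P_0$. Let $e_B$ be the identity of $B$, viewed as an idempotent of $A$. The restriction functor is $\mathcal{R}=\mathrm{Hom}_A(Ae_B,-)$ and the extension functor is $\mathcal{E}=\mathrm{Hom}_B(e_BA,-)$; $(\mathcal{R},\mathcal{E})$ is an adjoint pair, both functors are exact. There is a unique indecomposable projective $A$-module $\tilde P$ which is not a projective $B$-module; $S$ denotes its simple top, which is an injective $A$-module of projective dimension at most one. *)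

(* Defs.v *)
From HB Require Import structures.
From mathcomp Require Import all_boot all_algebra all_field.
Set Implicit Arguments.
Unset Strict Implicit.
Unset Printing Implicit Defensive.
Import GRing.Theory.
Local Open Scope ring_scope.

Definition fin_gen (B : nzRingType) (M : lmodType B) : Prop :=
  exists s : seq M, forall m : M,
    exists c : seq B, m = \sum_(i < size s) c`_i *: s`_i.

Definition projective_mod (B : nzRingType) (P : lmodType B) : Prop :=
  forall (M N : lmodType B) (pi : M -> N) (phi : P -> N),
    linear pi -> linear phi -> (forall n, exists m, pi m = n) ->
    exists psi : P -> M, linear psi /\ forall p, pi (psi p) = phi p.

(* An element (b, p, l) stands for the matrix [[b, p], [0, l]].             *)

Section OnePoint.
Variables (k : fieldType) (B : falgType k) (P0 : lmodType B).

Definition onept : Type := (B * P0 * k)%type.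
HB.instance Definition _ := GRing.Zmodule.on onept.

(* right action of k on P0 (P0 is a B-k-bimodule through k -> B) *)
Definition kact (l : k) (p : P0) : P0 := (l%:A : B) *: p.

Definition onept_one : onept := (1, 0, 1).
Definition onept_mul (x y : onept) : onept :=
  (x.1.1 * y.1.1, x.1.1 *: y.1.2 + kact y.2 x.1.2, x.2 * y.2).

Lemma kactD l : {morph kact l : p q / p + q}.
Proof. by move=> p q; rewrite /kact scalerDr. Qed.
Lemma kactDl p l m : kact (l + m) p = kact l p + kact m p.
Proof. by rewrite /kact scalerDl scalerDl. Qed.
Lemma kact1 p : kact 1 p = p.
Proof. by rewrite /kact scale1r scale1r. Qed.
Lemma kact0 p : kact 0 p = 0.
Proof. by rewrite /kact scale0r scale0r. Qed.
Lemma kact0r l : kact l 0 = 0.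
Proof. by rewrite /kact scaler0. Qed.
Lemma kactA l m p : kact l (kact m p) = kact (m * l) p.
Proof. by rewrite /kact scalerA -scalerAl mul1r scalerA mulrC. Qed.
Lemma kactC l (b : B) p : b *: kact l p = kact l (b *: p).
Proof. by rewrite /kact !scalerA -scalerAl mul1r -scalerAr mulr1. Qed.

Lemma onept_mulA : associative onept_mul.
Proof.
move=> [[a p l]] [[b q m]] [[c r n]]; rewrite /onept_mul /=.
congr (_, _, _); rewrite ?mulrA //.
by rewrite scalerDr kactD kactC scalerA kactA addrA.
Qed.

Lemma onept_mul1r : left_id onept_one onept_mul.
Proof.
by move=> [[a p l]]; rewrite /onept_mul /= !mul1r scale1r kact0r addr0.
Qed.

Lemma onept_mulr1 : right_id onept_one onept_mul.
Proof.
by move=> [[a p l]]; rewrite /onept_mul /= !mulr1 scaler0 add0r kact1.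
Qed.

Lemma onept_mulDl : left_distributive onept_mul +%R.
Proof.
move=> [[a p l]] [[b q m]] [[c r n]]; rewrite /onept_mul /=.
congr (_, _, _); rewrite ?mulrDl //.
by rewrite scalerDl kactD addrACA.
Qed.

Lemma onept_mulDr : right_distributive onept_mul +%R.
Proof.
move=> [[a p l]] [[b q m]] [[c r n]]; rewrite /onept_mul /=.
congr (_, _, _); rewrite ?mulrDr //.
by rewrite scalerDr kactDl addrACA.
Qed.

Lemma onept_oner_neq0 : onept_one != 0.
Proof.
apply/eqP => /(congr1 snd) /= /eqP; by rewrite oner_eq0.
Qed.

HB.instance Definition _ := GRing.Zmodule_isNzRing.Build onept
  onept_mulA onept_mul1r onept_mulr1 onept_mulDl onept_mulDr onept_oner_neq0.

(* The idempotents e_B = (1,0,0) and e_k = (0,0,1). *)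
Definition eB : onept := (1, 0, 0).

(* The projective A-module A e_B = {(b,0,0)}, identified with its
   (1,1)-entry b : B; A acts by left multiplication:
   (c,q,m) (b,0,0) = (c b, 0, 0). *)
Definition AeB : Type := (fun _ : lmodType B => (B : Type)) P0.
HB.instance Definition _ := GRing.Zmodule.on AeB.
Definition AeB_scale (a : onept) (z : AeB) : AeB := (a.1.1 * (z : B) : B).
Lemma AeB_scalerA a b v : AeB_scale a (AeB_scale b v) = AeB_scale (a * b) v.
Proof. by rewrite /AeB_scale mulrA. Qed.
Lemma AeB_scale1r : left_id 1 AeB_scale.
Proof. by move=> v; rewrite /AeB_scale mul1r. Qed.
Lemma AeB_scalerDr : right_distributive AeB_scale +%R.
Proof. by move=> a u v; rewrite /AeB_scale mulrDr. Qed.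
Lemma AeB_scalerDl v : {morph AeB_scale^~ v : a b / a + b}.
Proof. by move=> a b; rewrite /AeB_scale mulrDl. Qed.
HB.instance Definition _ := GRing.Zmodule_isLmodule.Build onept AeB
  AeB_scalerA AeB_scale1r AeB_scalerDr AeB_scalerDl.
Definition inAeB (z : AeB) : onept := ((z : B), 0, 0).

(* The B-module e_B A = {(b,p,0)}, identified with pairs (b,p); the left
   action of B = e_B A e_B is (c,0,0)(b,p,0) = (c b, c p, 0). *)
Definition eBA : lmodType B := (B^o * P0)%type.
Definition ineBA (y : eBA) : onept := (y.1 : B, y.2, 0).

(* The simple A-module S = top of the projective A e_k = {(0,p,l)}:
   S = k, with (b,p,l) acting by multiplication by l. *)
Definition Smod : Type := (fun _ : lmodType B => k) P0.
HB.instance Definition _ := GRing.Zmodule.on Smod.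
Definition S_scale (a : onept) (z : Smod) : Smod := (a.2 * (z : k) : k).
Lemma S_scalerA a b v : S_scale a (S_scale b v) = S_scale (a * b) v.
Proof. by rewrite /S_scale mulrA. Qed.
Lemma S_scale1r : left_id 1 S_scale.
Proof. by move=> v; rewrite /S_scale mul1r. Qed.
Lemma S_scalerDr : right_distributive S_scale +%R.
Proof. by move=> a u v; rewrite /S_scale mulrDr. Qed.
Lemma S_scalerDl v : {morph S_scale^~ v : a b / a + b}.
Proof. by move=> a b; rewrite /S_scale mulrDl. Qed.
HB.instance Definition _ := GRing.Zmodule_isLmodule.Build onept Smod
  S_scalerA S_scale1r S_scalerDr S_scalerDl.

(* Restriction R X = Hom_A(A e_B, X), extension E Y = Hom_B(e_B A, Y).      *)
(* We describe the underlying set of E (R X) through predicates on plain    *)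
(* functions  g : e_B A -> (A e_B -> X).                                     *)

Definition in_R (X : lmodType onept) (f : AeB -> X) : Prop := linear f.

(* The B-module structure of R X: (b . f)(z) = f (z b), with z b computed
   in A as (z,0,0)(b,0,0) = (z b,0,0). *)
Definition R_scale (X : lmodType onept) (b : B) (f : AeB -> X) : AeB -> X :=
  fun z => f ((z : B) * b : AeB).

Definition in_ER (X : lmodType onept) (g : eBA -> AeB -> X) : Prop :=
  (forall y, in_R (g y)) /\
  (forall (b : B) (y y' : eBA) (z : AeB),
      g (b *: y + y') z = R_scale b (g y) z + g y' z).

Definition unit_ER (X : lmodType onept) (x : X) : eBA -> AeB -> X :=
  fun y z => (inAeB z * ineBA y) *: x.

(* delta_X is an epimorphism (i.e. surjective) in Mod-A. *)
Definition unit_ER_epi (X : lmodType onept) : Prop :=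
  forall g : eBA -> AeB -> X, in_ER g ->
    exists x : X, forall y z, unit_ER x y z = g y z.

(* Ext^1_A(M, X) = 0 (Yoneda description): every short exact sequence
   0 -> X -> E -> M -> 0 of A-modules splits. *)
Definition Ext1_zero (M X : lmodType onept) : Prop :=
  forall (E : lmodType onept) (f : X -> E) (g : E -> M),
    linear f -> linear g -> injective f -> (forall m, exists e, g e = m) ->
    (forall e, g e = 0 <-> exists x, e = f x) ->
    exists s : M -> E, linear s /\ forall m, g (s m) = m.

End OnePoint.

(* Main.v *)
Require Import Defs.
From HB Require Import structures.
From mathcomp Require Import all_boot all_algebra all_field.
Set Implicit Arguments.
Unset Strict Implicit.
Unset Printing Implicit Defensive.
Import GRing.Theory.
Local Open Scope ring_scope.

Section Aux.
Variables (k : fieldType) (B : falgType k) (P0 : lmodType B).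
Local Notation A := (onept P0).

Lemma mulE (a b : A) : a * b = onept_mul a b.
Proof. by []. Qed.

Record goodmap (X : lmodType A) := GoodMap {
  gm :> P0 -> X;
  gmD : forall p q, gm (p + q) = gm p + gm q;
  gmZ : forall (a : A) p, a *: gm p = gm (a.1.1 *: p) }.

Variables (X : lmodType A) (h : goodmap X).

Definition Ecar : Type := (fun _ : goodmap X => (X * k)%type) h.
HB.instance Definition _ := GRing.Zmodule.on Ecar.

Lemma gm0 : h 0 = 0.
Proof. have H := gmD h 0 0; rewrite addr0 in H; apply: (@addrI _ (h 0)); by rewrite addr0 -H. Qed.

Definition E_scale (a : A) (e : Ecar) : Ecar :=
  (a *: e.1 + h (kact e.2 a.1.2), a.2 * e.2).

Lemma E_scalerA a b v : E_scale a (E_scale b v) = E_scale (a * b) v.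
Proof.
case: v => x m; case: a => [[a1 a2] a3]; case: b => [[b1 b2] b3].
rewrite /E_scale /= /onept_mul /=; congr (_, _); last by rewrite mulrA.
rewrite scalerDr scalerA gmZ /= kactC -addrA -gmD; congr (_ + h _).
by rewrite kactD kactA.
Qed.
Lemma E_scale1r : left_id 1 E_scale.
Proof.
case=> x m; rewrite /E_scale /=; congr (_, _); last by rewrite mul1r.
by rewrite scale1r /= kact0r gm0 addr0.
Qed.
Lemma E_scalerDr : right_distributive E_scale +%R.
Proof.
move=> a [x m] [y n]; rewrite /E_scale /=; congr (_, _); last by rewrite mulrDr.
by rewrite scalerDr kactDl gmD addrACA.
Qed.
Lemma E_scalerDl v : {morph E_scale^~ v : a b / a + b}.
Proof.
case: v => x m a b; rewrite /E_scale /=; congr (_, _); last by rewrite mulrDl.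
by rewrite scalerDl kactD gmD addrACA.
Qed.
HB.instance Definition _ := GRing.Zmodule_isLmodule.Build A Ecar
  E_scalerA E_scale1r E_scalerDr E_scalerDl.

Lemma EscaleE (a : A) (e : Ecar) : a *: e = E_scale a e.
Proof. by []. Qed.
End Aux.

Lemma pairDE (U V : zmodType) (x x' : U) (y y' : V) :
  ((x, y) + (x', y') : U * V) = (x + x', y + y').
Proof. by []. Qed.
Lemma pairZE (R : pzRingType) (U V : lmodType R) (a : R) (x : U) (y : V) :
  (a *: (x, y) : U * V) = (a *: x, a *: y).
Proof. by []. Qed.

Definition oneAeB (k : fieldType) (B : falgType k) (P0 : lmodType B) : AeB P0 := (1 : B).

Section Main.
Variables (k : fieldType) (B : falgType k) (P0 : lmodType B).
Local Notation A := (onept P0).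
Definition mk (b : B) (p : P0) (l : k) : A := (b, p, l).

Lemma mkM b p l c q m : mk b p l * mk c q m = mk (b * c) (b *: q + kact m p) (l * m).
Proof. by []. Qed.
Lemma mkD b p l c q m : mk b p l + mk c q m = mk (b + c) (p + q) (l + m).
Proof. by []. Qed.
Lemma AeBscaleE (a : A) (z : AeB P0) : a *: z = (a.1.1 * (z : B) : B).
Proof. by []. Qed.
Lemma SscaleE (a : A) (z : Smod P0) : a *: z = (a.2 * (z : k) : k).
Proof. by []. Qed.

Lemma ext_epi (X : lmodType A) : Ext1_zero (Smod P0) X -> unit_ER_epi X.
Proof.
move=> Hext G [GR GB].
have GZ y a z : G y (a *: z) = a *: G y z by exact: (GRing.semilinear_linear (GR y)).1.
have GD y : {morph G y : u v / u + v} by exact: (GRing.semilinear_linear (GR y)).2.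
have G01 : G 0 1 = 0.
  have := GB 1 0 0 1; rewrite scaler0 addr0 /R_scale mulr1 => H.
  by apply: (@addrI _ (G 0 1)); rewrite addr0 -H.
pose h2 (p : P0) := G ((0 : B^o), p) 1.
have hD p q : h2 (p + q) = h2 p + h2 q.
  have := GB 1 (0, p) (0, q) 1; rewrite /R_scale mulr1 /h2 => <-.
  by congr (G _ _); rewrite scale1r pairDE add0r.
have hZ (a : A) p : a *: h2 p = h2 (a.1.1 *: p).
  rewrite /h2 -GZ AeBscaleE mulr1.
  have := GB a.1.1 (0, p) 0 1; rewrite /R_scale mul1r G01 !addr0 => <-.
  by congr (G _ _); rewrite pairZE scaler0.
pose hh := GoodMap hD hZ.
have h20 : h2 0 = 0 := gm0 hh.
pose f := (fun x => (x, 0) : Ecar hh).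
pose g := (fun e : Ecar hh => (e.2 : Smod P0)).
have Lf : linear f.
  move=> a u v; rewrite /f EscaleE /E_scale /= kact0 h20 mulr0 pairDE !addr0.
  by [].
have Lg : linear g.
  by move=> a u v; rewrite /g EscaleE /E_scale /=.
have injf : injective f by move=> u v [].
have surjg : forall m, exists e, g e = m by move=> m; exists (0, m).
have kerg : forall e, g e = 0 <-> exists x, e = f x.
  by case=> u m; split => [/= ->|[x [_ ->]]]; [exists u|].
have [s [Ls Hs]] := Hext (Ecar hh) f g Lf Lg injf surjg kerg.

case Es1 : (s 1) => [x1 m1].
have m11 : m1 = 1 by have := Hs 1; rewrite Es1.
have key p : h2 p = - (mk 0 p 0 *: x1).
  have H := Ls (mk 0 p 0) 1 0.
  have H0 : mk 0 p 0 *: (1 : Smod P0) + 0 = 0 by rewrite SscaleE /= mul0r addr0.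
  rewrite H0 -[s 0 in LHS]add0r in H; move/addIr/esym: H => H.
  have := congr1 fst H; rewrite Es1 EscaleE /E_scale /= m11 kact1 => /eqP.
  by rewrite addrC addr_eq0 => /eqP.
pose u := G (1, 0) 1.
have uE : mk 1 0 0 *: u = u by rewrite /u -GZ AeBscaleE /= mulr1.
have Gyz y z : G y z = mk z 0 0 *: (mk y.1 0 0 *: u + h2 y.2).
  rewrite {1}(_ : z = mk z 0 0 *: (oneAeB P0)); last by rewrite AeBscaleE /= mulr1.
  rewrite GZ; congr (_ *: _); case: y => y1 y2 /=.
  have -> : ((y1, y2) : eBA P0) = y1 *: (1, 0) + (0, y2).
    by rewrite pairZE pairDE scaler0 !addr0 add0r; congr (_, _); exact: (esym (mulr1 y1)).
  rewrite GB /R_scale /u -GZ AeBscaleE /= mul1r mulr1. done.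
exists (u - mk 0 0 1 *: x1) => y z.
rewrite /unit_ER Gyz key; case: y => y1 y2 /=.
rewrite -[inAeB z * ineBA (y1, y2)]/(mk z 0 0 * mk y1 y2 0) mkM.
rewrite -{1 2}uE !scalerDr !scalerN !scalerA !mkM.
by rewrite !kact0r !kact0 !scaler0 !mulr0 !mul0r !addr0 kact1 add0r.
Qed.

Lemma epi_ext (X : lmodType A) : unit_ER_epi X -> Ext1_zero (Smod P0) X.
Proof.
move=> Hepi E f g Lf Lg injf surjg ker.
have [fZ fD] := GRing.semilinear_linear Lf.
have [gZ gD] := GRing.semilinear_linear Lg.
have f0 : f 0 = 0.
  by apply: (@addrI _ (f 0)); rewrite -fD !addr0.
have [e0 ge0] := surjg 1.
pose e1 := mk 0 0 1 *: e0.
have gZ' a e : g (a *: e) = (a.2 * (g e : k) : k) by exact: gZ.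
have fZ' a x : f (a *: x) = a *: f x by exact: fZ.
have ge1 : g e1 = 1 by rewrite /e1 gZ' ge0 /= mulr1.
clearbody e1.
have exx : forall p, exists x, mk 0 p 0 *: e1 == f x.
  move=> p; case: (proj1 (ker (mk 0 p 0 *: e1))) => [|x ->].
    by rewrite gZ' ge1 /= mul0r.
  by exists x.
pose xp p := xchoose (exx p).
have Hx p : mk 0 p 0 *: e1 = f (xp p) by apply/eqP; exact: (xchooseP (exx p)).
have xpL b q q' : xp (b *: q + q') = mk b 0 0 *: xp q + xp q'.
  apply: injf; rewrite fD fZ' -!Hx scalerA -scalerDl mkM mkD.
  by rewrite kact0r addr0 !mulr0 addr0 add0r.
have xpE q : mk 1 0 0 *: xp q = xp q.
  by apply: injf; rewrite fZ' -!Hx scalerA mkM kact0r addr0 !mulr0 scale1r.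
pose G (y : eBA P0) (z : AeB P0) : X := inAeB z *: xp y.2.
have GER : in_ER G.
  split.
    move=> y a z z'; rewrite /G scalerA -scalerDl; congr (_ *: _).
    rewrite /inAeB AeBscaleE /=; case: a => [[a1 a2] a3] /=.
    change (mk (a1 * z + z') 0 0 = mk a1 a2 a3 * mk z 0 0 + mk z' 0 0).
    by rewrite mkM mkD kact0 scaler0 !addr0 mulr0.
  move=> b y y' z; rewrite /G /R_scale /= xpL scalerDr scalerA.
  by congr (_ *: _ + _); rewrite /inAeB mkM scaler0 kact0r addr0 mulr0.
have [x Hxx] := Hepi G GER.
have Hpx p : f (mk 0 p 0 *: x) = mk 0 p 0 *: e1.
  have := Hxx (0, p) 1; rewrite /unit_ER /G /= => H.
  rewrite Hx -xpE -H; congr (f (_ *: _)).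
  by rewrite /inAeB /ineBA /= mkM kact0r addr0 mul1r mulr0 scale1r.
pose e := e1 + f (- x).
have gfx : g (f (- x)) = 0 by apply/(proj2 (ker _)); exists (- x).
have ge : g e = 1 by rewrite /e gD gfx ge1 addr0.
have fN y : f (- y) = - f y by apply: (@addrI _ (f y)); rewrite -fD !subrr f0.
have pe p : mk 0 p 0 *: e = 0 by rewrite /e scalerDr -fZ' scalerN fN Hpx subrr.
clearbody e.
exists (fun m : Smod P0 => mk 0 0 m *: e); split.
  move=> a m m'; rewrite SscaleE scalerA -scalerDl.
  have -> : mk 0 0 (a.2 * m + m') = mk 0 (- kact m a.1.2) 0 + (a * mk 0 0 m + mk 0 0 m').
    case: a => [[a1 a2] a3] /=.
    change (mk 0 0 (a3 * m + m') = mk 0 (- kact m a2) 0 + (mk a1 a2 a3 * mk 0 0 m + mk 0 0 m')).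
    by rewrite mkM (mkD (a1 * 0)) mkD mulr0 scaler0 !add0r !addr0 addNr.
  by rewrite [LHS]scalerDl pe add0r.
by move=> m; rewrite gZ' ge /= mulr1.
Qed.
End Main.

Theorem lemma2p4 (k : closedFieldType) (B : falgType k) (P0 : lmodType B)
  (fgP0 : fin_gen P0) (projP0 : projective_mod P0)
  (X : lmodType (onept P0)) :
  unit_ER_epi X <-> Ext1_zero (Smod P0) X.
Proof. by split; [apply: epi_ext | apply: ext_epi]. Qed.
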